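(* Let $G$ be a finite cyclic group and let $f$ be an automorphism of $\mathcal{P}_{0}(G)$ with trivial pullback. Then $f$ is the identity.
   Context: For an additively written finite abelian group $G$, $\mathcal{P}_{0}(G)$ is the monoid of all subsets of $G$ containing $0$, with setwise addition and identity $\{0\}$. An automorphism $f$ of $\mathcal{P}_0(G)$ has trivial pullback if $f(\{0,a\})=\{0,a\}$ for all $a\in G$. *)

(* Defs.v *)
(* The finite group is a finGroupType written multiplicatively
   (identity 1, set product A * B); this is the paper's additive group with
   0 ~ 1 and A + B ~ A * B. *)
From mathcomp Require Import all_boot all_fingroup all_solvable.
Set Implicit Arguments. Unset Strict Implicit. Unset Printing Implicit Defensive.
Local Open Scope group_scope.

Definition P0 (gT : finGroupType) : {set {set gT}} := [set A : {set gT} | 1 \in A].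

Definition P0_automorphism (gT : finGroupType) (f : {set gT} -> {set gT}) : Prop :=
  [/\ {in P0 gT, forall A, f A \in P0 gT},
      {in P0 gT &, injective f},
      (forall B, B \in P0 gT -> exists2 A, A \in P0 gT & f A = B),
      {in P0 gT &, forall A B, f (A * B) = f A * f B}
    & f [set 1] = [set 1]].

Definition trivial_pullback (gT : finGroupType) (f : {set gT} -> {set gT}) : Prop :=
  forall a : gT, f [set 1; a] = [set 1; a].

(* Main.v *)
Require Import Defs.
From mathcomp Require Import all_boot all_fingroup all_solvable.
From mathcomp Require Import zify.
Set Implicit Arguments. Unset Strict Implicit. Unset Printing Implicit Defensive.

Section Aux.
Local Open Scope group_scope.
Variable gT : finGroupType.
Variable f : {set gT} -> {set gT}.
Hypothesis Hmul : {in P0 gT &, forall A B, f (A * B) = f A * f B}.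
Hypothesis H1 : f [set 1] = [set 1].
Hypothesis Htp : trivial_pullback f.

Lemma P0M (A B : {set gT}) : 1 \in A -> 1 \in B -> 1 \in A * B.
Proof. by move=> a b; rewrite -(mulg1 (1 : gT)) mem_mulg. Qed.

Lemma fixM (A B : {set gT}) : 1 \in A -> 1 \in B -> f A = A -> f B = B ->
  f (A * B) = A * B.
Proof. by move=> a b fa fb; rewrite Hmul ?inE // fa fb. Qed.

Fixpoint pw (a : gT) k : {set gT} :=
  if k is k'.+1 then pw a k' * [set 1; a] else [set 1].

Lemma pw1 a k : 1 \in pw a k.
Proof. elim: k => [|k IH] /=; first by rewrite set11. by apply: P0M IH (set21 _ _). Qed.

Lemma pw_fix a k : f (pw a k) = pw a k.
Proof. elim: k => [|k IH] //=. by rewrite fixM ?pw1 ?set21 ?Htp. Qed.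

Lemma pwP a k x : reflect (exists2 i, i <= k & x = a ^+ i) (x \in pw a k).
Proof.
apply: (iffP idP).
  elim: k x => [|k IH] x /=; first by rewrite inE => /eqP ->; exists 0.
  case/mulsgP => u v /IH [i le_ik ->]; rewrite !inE => /orP[] /eqP -> ->.
    by exists i; [apply: leqW | rewrite mulg1].
  by exists i.+1; rewrite ?expgSr.
case=> i; elim: k x i => [|k IH] x i /=.
  by rewrite leqn0 => /eqP -> ->; rewrite set11.
rewrite leq_eqVlt => /orP[/eqP -> -> | lt_ik ->].
  by rewrite expgSr mem_mulg ?set22 // (IH _ k).
by rewrite -(mulg1 (a ^+ i)) mem_mulg ?set21 // (IH _ i).
Qed.

Definition pl (s : seq gT) := foldr (fun a X => [set 1; a] * X) [set 1] s.

Lemma pl1 s : 1 \in pl s.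
Proof. elim: s => [|a s IH] /=; first by rewrite set11. by apply: P0M (set21 _ _) IH. Qed.

Lemma pl_fix s : f (pl s) = pl s.
Proof. elim: s => [|a s IH] //=. by rewrite fixM ?pl1 ?set21 ?Htp. Qed.

Lemma grp_fix (S : {group gT}) : f S = S.
Proof.
have -> : (S : {set gT}) = pl (enum S); last exact: pl_fix.
apply/eqP; rewrite eqEsubset; apply/andP; split.
  apply/subsetP => x; rewrite -mem_enum; elim: (enum S) => //= a s IH.
  rewrite inE => /orP[/eqP -> | /IH xs].
    by rewrite -{1}(mulg1 a) mem_mulg ?set22 ?pl1.
  by rewrite -(mul1g x) mem_mulg ?set21.
have : all (mem S) (enum S) by apply/allP => x; rewrite mem_enum.
elim: (enum S) => [|a s IH] /=; first by rewrite sub1set group1.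
case/andP => aS /IH sS; apply/subsetP => x /mulsgP[u v Hu Hv ->].
apply: groupM; last exact: (subsetP sS).
by move: Hu; rewrite !inE => /orP[] /eqP ->.
Qed.

Definition stab (A : {set gT}) := [set c | [forall a in A, a * c \in A]].

Lemma stab_group_set A : group_set (stab A).
Proof.
apply/group_setP; split; first by rewrite inE; apply/forall_inP => a; rewrite mulg1.
move=> x y; rewrite !inE => /forall_inP Hx /forall_inP Hy.
by apply/forall_inP => a Ha; rewrite mulgA Hy ?Hx.
Qed.

Definition C (S : {set gT}) z := [set x | z^-1 * x \notin S].

Lemma lemE (S : {group gT}) (X : {set gT}) z :
  (forall x c, x \in X -> c \in S -> x * c \in X) -> z \notin X ->
  (forall c, c \notin S -> z \in X * [set 1; c]) -> X = C S z.
Proof.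
move=> per zX Hz; apply/setP => x; rewrite inE.
case: (boolP (z^-1 * x \in S)) => H /=.
  apply/negP => xX; move/negP: zX; apply.
  have := per x (x^-1 * z) xX; rewrite mulKVg; apply.
  by rewrite -groupV invMg invgK.
have cS : x^-1 * z \notin S by apply: contra H => H'; rewrite -groupV invMg invgK.
case/mulsgP: (Hz _ cS) => a b aX; rewrite !inE => /orP[] /eqP -> E.
  by move: zX; rewrite E mulg1 aX.
have : a * (x^-1 * z) = x * (x^-1 * z) by rewrite -E mulKVg.
by move/mulIg => <-.
Qed.

Lemma CF (S : {group gT}) y c : c \notin S -> forall w, w \in C S y * [set 1; c].
Proof.
move=> cS w; case: (boolP (y^-1 * w \in S)) => H.
  rewrite -(mulgKV c w) mem_mulg ?set22 // inE mulgA.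
  by apply: contra cS => H'; rewrite -groupV -(groupMl _ H).
by rewrite -(mulg1 w) mem_mulg ?set21 // inE.
Qed.

Lemma cyc_fix (S : {group gT}) z : cyclic [set: gT] -> z \notin S -> f (C S z) = C S z.
Proof.
move=> /cyclicP[g Hg] zS.
have gen : forall x, exists k, x = g ^+ k.
  by move=> x; apply/cycleP; rewrite -Hg inE.
have cm : forall m n, commute (g ^+ m) (g ^+ n) by move=> m n; apply: commuteX2.
have ex : exists k, (0 < k) && (g ^+ k \in S).
  by exists #[g]; rewrite order_gt0 expg_order group1.
have [d /andP[d_gt0 gdS] dmin] := ex_minnP ex.
have D : forall k, (g ^+ k \in S) = (d %| k).
  move=> k; rewrite {1}(divn_eq k d) expgD mulnC expgM (groupMl _ (groupX _ gdS)).
  rewrite /dvdn; case: (posnP (k %% d)) => [-> | pos]; first by rewrite expg0 group1.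
  apply/negbTE; apply/negP => H.
  have := dmin _ (introT andP (conj pos H)); rewrite leqNgt ltn_pmod //.
have KE : forall k j, ((g ^+ j)^-1 * g ^+ k \in S) = (k == j %[mod d]).
  move=> k j; rewrite -(groupMr _ (x := g ^+ (j * d)%N)) ?D ?dvdn_mull //.
  have -> : (g ^+ j)^-1 * g ^+ k * g ^+ (j * d) = g ^+ (k + j * d.-1).
    have -> : (j * d = j + j * d.-1)%N by rewrite -{1}(prednK d_gt0) mulnS.
    by rewrite expgD mulgA -(mulgA _ (g ^+ k)) (cm k j) mulgA mulVg mul1g -expgD.
  have E : ((k + j * d.-1 + j) %% d = k %% d)%N.
    by rewrite -addnA -mulnSr prednK // addnC modnMDl.
  by rewrite D /dvdn -(mod0n d) -(eqn_modDr j) add0n E.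
have Vl : forall l, exists2 s, s \in S & (g ^+ l)^-1 = g ^+ (l * d.-1) * s.
  move=> l; exists (g ^+ (l * d))^-1; first by rewrite groupV D dvdn_mull.
  have -> : (l * d = l + l * d.-1)%N by rewrite -{1}(prednK d_gt0) mulnS.
  by rewrite expgD invMg mulKVg.
have [j Hj] := gen z.
set r := j %% d.
have r_gt0 : 0 < r by move: zS; rewrite Hj D /dvdn lt0n.
have r_lt : r < d by rewrite ltn_pmod.
have -> : C S z = pw g r.-1 * pw g^-1 (d - r).-1 * S.
  apply/setP => x; rewrite inE Hj; apply/idP/idP.
    have [k ->] := gen x; rewrite KE => Hne.
    set t := k %% d.
    have gk : g ^+ k = g ^+ t * (g ^+ d) ^+ (k %/ d).
      by rewrite {1}(divn_eq k d) expgD (cm (k %/ d * d)%N) mulnC expgM.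
    have tne : t != r by exact: Hne.
    have t_lt : t < d by rewrite ltn_pmod.
    rewrite gk; case: (ltnP t r) => tr.
      rewrite -(mulg1 (g ^+ t)) mem_mulg ?(groupX _ gdS) //.
      by rewrite mem_mulg ?pw1 //; apply/pwP; exists t => //; lia.
    have -> : g ^+ t = (g^-1) ^+ (d - t) * g ^+ d.
      have -> : g ^+ d = g ^+ (d - t) * g ^+ t by rewrite -expgD subnK // ltnW.
      by rewrite expgVn mulKg.
    rewrite -mulgA -(mul1g ((g^-1) ^+ (d - t))) mem_mulg ?(groupM gdS (groupX _ gdS)) //.
    by rewrite mem_mulg ?pw1 //; apply/pwP; exists (d - t) => //; lia.
  case/mulsgP => u s Hu Hs ->; case/mulsgP: Hu => u1 u2 /pwP[i hi ->] /pwP[l hl ->] ->.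
  rewrite expgVn; have [s' Hs' ->] := Vl l.
  rewrite !mulgA (groupMr _ Hs) (groupMr _ Hs') -mulgA -expgD KE.
  apply/negP => E.
  have E1 : ((i + l * d.-1 + l) %% d = i)%N.
    by rewrite -addnA -mulnSr prednK // addnC modnMDl modn_small //; lia.
  have E2 : ((j + l) %% d = r + l)%N.
    by rewrite -modnDml -/r modn_small //; lia.
  move: E; rewrite -(eqn_modDr l) E1 E2; lia.
rewrite fixM ?group1 ?grp_fix //; first by rewrite P0M ?pw1.
by rewrite fixM ?pw1 ?pw_fix.
Qed.

End Aux.

Local Open Scope group_scope.

Theorem corollary3p4 (gT : finGroupType) (f : {set gT} -> {set gT}) :
  cyclic [set: gT] -> P0_automorphism f -> trivial_pullback f ->
  {in P0 gT, forall A, f A = A}.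
Proof.
move=> Hcyc [Hp0 Hinj Hsurj Hmul H1] Htp.
have Gfix : f [set: gT] = [set: gT] by exact: (grp_fix Hmul H1 Htp (setT_group gT)).
suff main : forall k (A : {set gT}), 1 \in A -> #|gT| <= #|A| + k -> f A = A.
  by move=> A; rewrite inE => A1; apply: (main #|gT|) => //; rewrite leq_addl.
elim=> [|k IH] A A1 Hk.
  have -> : A = [set: gT]; last exact: Gfix.
  by apply/eqP; rewrite eqEcard subsetT cardsT -(addn0 #|A|).
have IH' : forall X : {set gT}, 1 \in X -> #|A| < #|X| -> f X = X.
  by move=> X X1 lt; apply: IH => //; lia.
pose S := Group (stab_group_set A).
have Sdef : forall c, (c \in S) = [forall a in A, a * c \in A].
  by move=> c; rewrite inE.
have K0 : forall c, c \in S -> A * [set 1; c] = A.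
  move=> c; rewrite Sdef => /forall_inP Hc; apply/setP => x; apply/idP/idP.
    by case/mulsgP => a b aA; rewrite !inE => /orP[] /eqP -> ->; rewrite ?mulg1 ?Hc.
  by move=> xA; rewrite -(mulg1 x) mem_mulg ?set21.
have K1 : forall c, c \in S -> f A * [set 1; c] = f A.
  by move=> c cS; rewrite -{1}(Htp c) -Hmul ?(K0 c cS) // inE ?set21.
have K2 : forall c, c \notin S -> f A * [set 1; c] = A * [set 1; c].
  move=> c cS.
  have A0 : A \in P0 gT by rewrite inE.
  have c1 : [set 1; c] \in P0 gT by rewrite inE set21.
  rewrite -{1}(Htp c) -Hmul //.
  apply: IH'; first by rewrite P0M ?set21.
  apply: proper_card; apply/properP; split.
    by apply/subsetP => x xA; rewrite -(mulg1 x) mem_mulg ?set21.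
  move: cS; rewrite Sdef => /forall_inPn [a aA acA].
  by exists (a * c); rewrite ?mem_mulg ?set22.
have Aper : forall x c, x \in A -> c \in S -> x * c \in A.
  by move=> x0 c0 xA; rewrite Sdef => /forall_inP; apply.
have [//|Hne] := eqVneq (f A) A.
suff [z Hz] : exists z, A = C S z.
  have zS : z \notin S.
    by move: A1; rewrite Hz inE mulg1 groupV.
  have := cyc_fix Hmul H1 Htp Hcyc zS; rewrite -Hz => HA.
  by rewrite HA eqxx in Hne.
have [y Hy] : exists y, (y \in f A) != (y \in A).
  apply/existsP; apply: contraR Hne => /existsPn H; apply/eqP/setP => y.
  by apply/eqP; have := H y; rewrite negbK.
case: (boolP (y \in A)) => yA; [rewrite yA eqb_id in Hy | rewrite (negbTE yA) eqbF_neg negbK in Hy].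
  have Bper : forall x c, x \in f A -> c \in S -> x * c \in f A.
    by move=> x0 c0 xB c0S; rewrite -(K1 c0 c0S) mem_mulg ?set22.
  have HyB : forall c, c \notin S -> y \in f A * [set 1; c].
    by move=> c0 c0S; rewrite K2 // -(mulg1 y) mem_mulg ?set21.
  have EB := lemE Bper Hy HyB.
  have [z zA] : exists z, z \notin A.
    apply/existsP; apply: contraR Hne => /existsPn H.
    have -> : A = [set: gT]; last by rewrite Gfix.
    by apply/setP => x; rewrite inE; have := H x; rewrite negbK.
  exists z; apply: lemE Aper zA _ => c0 c0S.
  by rewrite -K2 // EB CF.
exists y; apply: lemE Aper yA _ => c0 c0S.
by rewrite -K2 // -(mulg1 y) mem_mulg ?set21.
Qed.
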